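(* Let $\mathcal{M}=\langle\mathcal{X},X_W,\Phi,\mathcal{B}\rangle$ be a system of constraints with $\mathcal{B}=\langle V,F,E\rangle$, let $\langle T_I,T_C,T_O\rangle$ be the coarse decomposition of the subgraph of $\mathcal{B}$ induced by $(V\setminus W)\cup F$ and $\mathrm{CO}(\mathcal{B})=\langle\mathcal{V},\mathcal{E}\rangle$ the causal ordering graph. Assume $\mathcal{M}$ is maximally uniquely solvable w.r.t. $\mathrm{CO}(\mathcal{B})$ and let $X^*$ be a solution of $\mathcal{M}$. Let $S_F\subseteq(T_C\cup T_O)\cap F$ and $S_V\subseteq(T_C\cup T_O)\cap(V\setminus W)$ be such that $S_F\cup S_V\in\mathcal{V}$, let $\xi_{S_V}\in\mathcal{X}_{S_V}$, and let $X'$ be a solution of the intervened system $\mathcal{M}_{\mathrm{do}(S_F,S_V,\xi_{S_V})}$. If there is no directed path in $\mathrm{CO}(\mathcal{B})$ from any $x\in S_V$ to $v\in(T_C\cup T_O)\cap V$, then $X^*_v=X'_v$ almost surely. (If there is $x\in S_V$ with a directed path from $x$ to $v$ in $\mathrm{CO}(\mathcal{B})$, then $X^*_v$ may have a different distribution than $X'_v$.)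
   Context: System of constraints $\langle\mathcal{X},X_W,\Phi,\mathcal{B}\rangle$: $\mathcal{X}=\bigotimes_{v\in V}\mathcal{X}_v$ standard measurable spaces; $W\subseteq V$ and $X_W=(X_w)_{w\in W}$ independent random variables; $\Phi=(\Phi_f)_{f\in F}$, $\Phi_f=\langle\phi_f,c_f,V(f)\rangle$, $V(f)\subseteq V$, $c_f$ a constant in a standard measurable space, $\phi_f:\mathcal{X}_{V(f)}\to\mathcal{Y}$ measurable; $\mathcal{B}=\langle V,F,E\rangle$ with $E=\{(f-v):v\in V(f)\}$; $V(S_F)=\bigcup_{f\in S_F}V(f)$. A solution is a measurable $g:\mathcal{X}_W\to\mathcal{X}_{V\setminus W}$ with $\phi_f(g_{V(f)\setminus W}(X_W),X_{V(f)\cap W})=c_f$ for all $f$ a.s. (the solution random vector has components $g(X_W)$). Solvable w.r.t. $S_F\subseteq F$, $S_V\subseteq V(S_F)\setminus W$: there is a measurable $g_{S_V}:\mathcal{X}_{V(S_F)\setminus S_V}\to\mathcal{X}_{S_V}$ such that a.s., for all $x_{V(S_F)\setminus W}$, $x_{S_V}=g_{S_V}(x_{V(S_F)\setminus(S_V\cup W)},X_{V(S_F)\cap W})$ implies $\phi_f(x_{V(f)\setminus W},X_{V(f)\cap W})=c_f$ for all $f\in S_F$; uniquely solvable if the converse holds as well. Perfect intervention: for a single pair $(f,v)$ with $v\in V\setminus W$ and $\xi_v\in\mathcal{X}_v$, $\mathcal{M}_{\mathrm{do}(f,v,\xi_v)}$ replaces $\Phi_f$ by $\langle x_v\mapsto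 x_v,\ \xi_v,\ \{v\}\rangle$ and replaces $\mathcal{B}$ by $\langle V,F,E'\rangle$ with $E'$ = edges of $E$ not incident to $f$, plus $(v-f)$. For tuples $S_F=(f_1,\dots,f_n)$, $S_V=(v_1,\dots,v_n)$ (enumerations of the sets), $\mathrm{do}(S_F,S_V,\xi_{S_V})$ performs these interventions for all pairs $(f_i,v_i)$. Graph notions: $\mathrm{adj}(X)$ = neighbours; $F'\subseteq F$ self-contained if $|F'|=|\mathrm{adj}(F')|$ and $|F''|\le|\mathrm{adj}(F'')|$ for $F''\subseteq F'$; minimal self-contained = non-empty self-contained with no non-empty strict self-contained subset. For a maximum matching $M$, an alternating path is a sequence of distinct vertices (possibly one) with consecutive ones adjacent and edges alternating between not in $M$ and in $M$; coarse decomposition: $T_I$ = vertices joined by an alternating path to an unmatched variable vertex, $T_O$ = to an unmatched constraint vertex, $T_C$ = the rest. $\mathrm{CO}(\mathcal{B})=\langle\mathcal{V},\mathcal{E}\rangle$ is a partition of $V\cup F$ into clusters with edges $x\to C$ ($\mathrm{cl}(x)$ the cluster of $x$): with $\mathcal{B}'$ the subgraph induced by $(V\setminus W)\cup F$ and $\mathcal{B}_I,\mathcal{B}_C,\mathcal{B}_O$ the subgraphs induced by $T_I,T_C,T_O$: on $\mathcal{B}_C$, while the current graph $\mathcal{B}''$ is non-null, choose a minimal self-contained $S'_F$ of $\mathcal{B}''$, form cluster $C=S'_F\cup\mathrm{adj}_{\mathcal{B}''}(S'_F)$, add edges $v\to C$ for $v\in\mathrm{adj}_{\mathcal{B}_C}(S'_F)\setminus\mathrm{adj}_{\mathcal{B}''}(S'_F)$,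 delete $C$. Other clusters: connected components of $\mathcal{B}_I$ and $\mathcal{B}_O$, and $\{w\}$, $w\in W$. Further edges: $v\to\mathrm{cl}(f)$ for each edge $(v-f)$ with $v\in(T_O\cup T_C)\cap V$, $f\in T_I\cap F$, or $v\in T_O\cap V$, $f\in T_C\cap F$; and $w\to\mathrm{cl}(f)$ for $w\in W$, $f\in\mathrm{adj}_{\mathcal{B}}(w)$. A directed path from $x$ to $y$ exists if $\mathrm{cl}(x)=\mathrm{cl}(y)$ or there are clusters $V_1=\mathrm{cl}(x),\dots,V_k=\mathrm{cl}(y)$ with, for each $i<k$, some $z_i\in V_i$ and $(z_i\to V_{i+1})\in\mathcal{E}$. Maximally uniquely solvable w.r.t. $\mathrm{CO}(\mathcal{B})$: uniquely solvable w.r.t. $S\cap F$, $S\cap V$ for every cluster $S$ with $S\cap W=\emptyset$, $S\cap T_I=\emptyset$, and solvable w.r.t. $T_I\cap F$ and $(T_I\cap V)\setminus W$. *)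

(* Defs.v *)
From HB Require Import structures.
From mathcomp Require Import all_boot all_order all_algebra.
From mathcomp Require Import all_classical all_reals all_analysis.
Set Implicit Arguments. Unset Strict Implicit. Unset Printing Implicit Defensive.
Import Order.TTheory GRing.Theory Num.Theory.

Section Graph.
Variables (V F : finType) (W : {set V}) (Vf : F -> {set V}).

Definition node := (V + F)%type.

Definition isvar (a : node) : bool := if a is inl _ then true else false.

Definition adjB (a b : node) : bool :=
  match a, b with
  | inl v, inr f => v \in Vf f
  | inr f, inl v => v \in Vf f
  | _, _ => false
  end.

Definition inBp (a : node) : bool :=
  match a with inl v => v \notin W | inr _ => true end.

Definition adjBp (a b : node) : bool := [&& inBp a, inBp b & adjB a b].

Definition is_matching (M : {set V * F}) : bool :=
  [forall e in M, (e.1 \notin W) && (e.1 \in Vf e.2)] &&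
  [forall e1 in M, forall e2 in M,
     ((e1.1 == e2.1) || (e1.2 == e2.2)) ==> (e1 == e2)].

Definition is_max_matching (M : {set V * F}) : Prop :=
  is_matching M /\ forall M' : {set V * F}, is_matching M' -> #|M'| <= #|M|.

Definition inM (M : {set V * F}) (a b : node) : bool :=
  match a, b with
  | inl v, inr f => (v, f) \in M
  | inr f, inl v => (v, f) \in M
  | _, _ => false
  end.

Fixpoint alt_rec (M : {set V * F}) (b : bool) (x : node) (s : seq node) : bool :=
  if s is y :: s' then [&& adjBp x y, inM M x y == b & alt_rec M (~~ b) y s']
  else true.

Definition alt_path (M : {set V * F}) (x : node) (s : seq node) : bool :=
  [&& inBp x, uniq (x :: s) & alt_rec M false x s].

Definition unmatched (M : {set V * F}) (a : node) : bool :=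
  match a with
  | inl v => (v \notin W) && [forall f, (v, f) \notin M]
  | inr f => [forall v, (v, f) \notin M]
  end.

Definition T_I (M : {set V * F}) : {set node} :=
  [set y | `[< exists x s, [&& unmatched M x, isvar x, alt_path M x s
                              & last x s == y] >]].
Definition T_O (M : {set V * F}) : {set node} :=
  [set y | `[< exists x s, [&& unmatched M x, ~~ isvar x, alt_path M x s
                              & last x s == y] >]].
Definition T_C (M : {set V * F}) : {set node} :=
  [set y | [&& inBp y, y \notin T_I M & y \notin T_O M]].

Definition adjR (R S : {set node}) : {set node} :=
  [set y in R | [exists x in S, adjB x y]].

Definition self_contained (R S : {set node}) : bool :=
  [&& S \subset [set x in R | ~~ isvar x],
      #|S| == #|adjR R S|
    & [forall S' : {set node}, (S' \subset S) ==> (#|S'| <= #|adjR R S'|)]].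

Definition min_self_contained (R S : {set node}) : bool :=
  [&& self_contained R S, S != finset.set0 &
      [forall S' : {set node}, ((S' != finset.set0) && (S' \proper S)) ==>
                                 ~~ self_contained R S']].

(* a run of the causal ordering algorithm on the current graph (induced by R):
   the successive choices of minimal self-contained sets, ending with the
   null graph *)
Fixpoint co_run (R : {set node}) (run : seq {set node}) : Prop :=
  match run with
  | [::] => R = finset.set0
  | Sc :: run' => min_self_contained R Sc /\
                 co_run (R :\: (Sc :|: adjR R Sc)) run'
  end.

Fixpoint co_clusters (R : {set node}) (run : seq {set node}) : seq {set node} :=
  if run is Sc :: run' then (Sc :|: adjR R Sc) :: co_clusters (R :\: (Sc :|: adjR R Sc)) run'
  else [::].

Fixpoint co_edges (BC R : {set node}) (run : seq {set node})
  : {set node * {set node}} :=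
  if run is Sc :: run' then
    [set (y, Sc :|: adjR R Sc) | y in adjR BC Sc :\: adjR R Sc]
      :|: co_edges BC (R :\: (Sc :|: adjR R Sc)) run'
  else finset.set0.

Definition comps (T : {set node}) : {set {set node}} :=
  [set [set y in T | connect (fun a b => [&& a \in T, b \in T & adjB a b]) x y]
    | x in T].

Definition is_CO (M : {set V * F}) (Cl : {set {set node}})
  (Ed : {set node * {set node}}) : Prop :=
  exists run : seq {set node},
    co_run (T_C M) run /\
    Cl = [set C | C \in co_clusters (T_C M) run] :|: comps (T_I M)
           :|: comps (T_O M) :|: [set [set inl w] | w in W] /\
    Ed = co_edges (T_C M) (T_C M) run
      :|: [set (inl e.1, finset.pblock Cl (inr e.2)) | e : V * F &
             (e.1 \in Vf e.2) &&
             ((((inl e.1 \in T_O M :|: T_C M) && (inr e.2 \in T_I M))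
               || ((inl e.1 \in T_O M) && (inr e.2 \in T_C M)))
              || (e.1 \in W))].

Definition dpath (Cl : {set {set node}}) (Ed : {set node * {set node}})
  (x y : node) : Prop :=
  exists s : seq {set node},
    path (fun C D : {set node} => [exists z in C, (z, D) \in Ed]) (finset.pblock Cl x) s /\
    last (finset.pblock Cl x) s = finset.pblock Cl y.

End Graph.

Section Prob.
Local Open Scope classical_set_scope.
Variables (V F : finType) (W : {set V}) (Vf : F -> {set V}).
Variables (dX : V -> measure_display) (X : forall v, measurableType (dX v)).
Variables (dY : F -> measure_display) (Y : forall f, measurableType (dY f)).
Variables (phi : forall f, (forall v, X v) -> Y f) (c : forall f, Y f).
Variables (dO : measure_display) (Omega : measurableType dO) (R : realType)
  (P : probability Omega R).

(* elements of X_A are represented by full assignments x : forall v, X v of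
   which only the coordinates in A matter; the product sigma-algebra on X_A
   (pulled back to full assignments) is generated by the coordinates in A *)
Definition coord_gen (A : {set V}) : set (set (forall v, X v)) :=
  [set E | exists a, a \in A /\ exists B : set (X a),
             measurable B /\ E = (fun x : forall v, X v => x a) @^-1` B].
Definition coord_sigma (A : {set V}) := <<s coord_gen A >>.

Definition meas_map (A B : {set V})
  (g : (forall v, X v) -> forall v, X v) : Prop :=
  forall b, b \in B ->
    (forall x y : forall v, X v, (forall a, a \in A -> x a = y a) -> g x b = g y b)
    /\ forall E : set (X b), measurable E ->
         coord_sigma A ((fun x => g x b) @^-1` E).

Definition wf_constraints : Prop :=
  forall f,
    (forall x y : forall v, X v, (forall a, a \in Vf f -> x a = y a) -> phi f x = phi f y)
    /\ forall E : set (Y f), measurable E -> coord_sigma (Vf f) (phi f @^-1` E).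

(* X_W = (X_w)_{w in W}, as a random assignment of which only W-coordinates
   matter: random variables, mutually independent *)
Definition exo_rv (XW : Omega -> forall v, X v) : Prop :=
  forall w, w \in W -> measurable_fun setT (fun o => XW o w).

Definition exo_indep (XW : Omega -> forall v, X v) : Prop :=
  forall B : forall w, set (X w), (forall w, w \in W -> measurable (B w)) ->
    (P [set o | forall w, w \in W -> B w (XW o w)] =
     \prod_(w in W) P [set o | B w (XW o w)])%E.

Definition merge (xw x : forall v, X v) : forall v, X v :=
  fun v => if v \in W then xw v else x v.

Definition sys_C (f : F) (x : forall v, X v) : Prop := phi f x = c f.

(* constraints of M_do(S_F, S_V, xi): the pairing of S_F with S_V is pv *)
Definition do_C (SF : {set F}) (pv : F -> V) (xi : forall v, X v)
  (f : F) (x : forall v, X v) : Prop :=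
  if f \in SF then x (pv f) = xi (pv f) else sys_C f x.

Definition is_solution (C : F -> (forall v, X v) -> Prop)
  (XW Xs : Omega -> forall v, X v) : Prop :=
  exists g : (forall v, X v) -> forall v, X v,
    meas_map W (~: W) g /\
    (forall o, Xs o = merge (XW o) (g (XW o))) /\
    {ae P, forall o, forall f, C f (merge (XW o) (g (XW o)))}.

Definition VS (SF : {set F}) : {set V} := \bigcup_(f in SF) Vf f.

Definition solvable (XW : Omega -> forall v, X v) (SF : {set F}) (SV : {set V})
  : Prop :=
  exists g : (forall v, X v) -> forall v, X v,
    meas_map (VS SF :\: SV) SV g /\
    {ae P, forall o, forall x : forall v, X v,
       (forall s, s \in SV -> merge (XW o) x s = g (merge (XW o) x) s) ->
       forall f, f \in SF -> sys_C f (merge (XW o) x)}.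

Definition uniquely_solvable (XW : Omega -> forall v, X v) (SF : {set F})
  (SV : {set V}) : Prop :=
  exists g : (forall v, X v) -> forall v, X v,
    meas_map (VS SF :\: SV) SV g /\
    {ae P, forall o, forall x : forall v, X v,
       (forall s, s \in SV -> merge (XW o) x s = g (merge (XW o) x) s) <->
       (forall f, f \in SF -> sys_C f (merge (XW o) x))}.

Local Close Scope classical_set_scope.
Definition max_uniq_solvable (XW : Omega -> forall v, X v) (M : {set V * F})
  (Cl : {set {set node V F}}) : Prop :=
  (forall S, S \in Cl -> [disjoint S & [set inl w | w in W]] ->
     [disjoint S & T_I W Vf M] ->
     uniquely_solvable XW [set f | inr f \in S] [set v | inl v \in S]) /\
  solvable XW [set f | inr f \in T_I W Vf M]
              [set v | (inl v \in T_I W Vf M) && (v \notin W)].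

End Prob.

(* Main.v *)
Require Import Defs.
From HB Require Import structures.
From mathcomp Require Import all_boot all_order all_algebra.
From mathcomp Require Import all_classical all_reals all_analysis.
Set Implicit Arguments. Unset Strict Implicit. Unset Printing Implicit Defensive.

Section GraphLemmas.
Variables (V F : finType) (W : {set V}) (Vf : F -> {set V}).
Implicit Types (M : {set V * F}) (x y z a : node V F) (s : seq (node V F)).

Lemma adjB_sym a b : adjB Vf a b = adjB Vf b a.
Proof. by case: a; case: b. Qed.

Lemma adjBp_sym a b : adjBp W Vf a b = adjBp W Vf b a.
Proof. by rewrite /adjBp adjB_sym; case: (inBp W a); case: (inBp W b). Qed.

Lemma inM_sym M a b : inM M a b = inM M b a.
Proof. by case: a; case: b. Qed.

Lemma adjB_type a b : adjB Vf a b -> isvar b = ~~ isvar a.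
Proof. by case: a; case: b. Qed.

Lemma alt_rec_rcons M b x s z :
  alt_rec W Vf M b x (rcons s z) =
  alt_rec W Vf M b x s && (adjBp W Vf (last x s) z && (inM M (last x s) z == b (+) odd (size s))).
Proof.
elim: s b x => [|y s IH] b x /=; first by rewrite addbF andbT.
rewrite IH; case: b; case: (odd (size s));
  by rewrite /= ?andbA.
Qed.

Lemma alt_rec_var M b x s : alt_rec W Vf M b x s ->
  isvar (last x s) = isvar x (+) odd (size s).
Proof.
elim: s b x => [|y s IH] b x /=; first by rewrite addbF.
case/and3P => /and3P[_ _ ad] _ /IH ->.
by rewrite (adjB_type ad); case: (isvar x); case: (odd (size s)).
Qed.

Lemma alt_rec_inBp M b x s : inBp W x -> alt_rec W Vf M b x s -> inBp W (last x s).
Proof.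
elim: s b x => [|y s IH] b x //= _.
by case/and3P => /and3P[_ hy _] _ /(IH _ _ hy).
Qed.

Lemma alt_path_rcons M x s z :
  alt_path W Vf M x (rcons s z) =
  alt_path W Vf M x s && [&& z \notin x :: s, adjBp W Vf (last x s) z
                            & inM M (last x s) z == odd (size s)].
Proof.
rewrite /alt_path -rcons_cons rcons_uniq alt_rec_rcons addFb.
by case: (inBp W x); case: (z \in x :: s); case: (uniq (x :: s));
   case: (alt_rec W Vf M false x s).
Qed.

Lemma alt_path_prefix M x s z : alt_path W Vf M x s -> z \in x :: s ->
  exists s', alt_path W Vf M x s' /\ last x s' = z.
Proof.
elim/last_ind: s => [|s y IH].
  by move=> H; rewrite inE => /eqP ->; exists [::].
move=> H; move: (H); rewrite alt_path_rcons => /andP[Hp _].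
rewrite -rcons_cons mem_rcons inE => /orP[/eqP->|Hz].
  by exists (rcons s y); rewrite last_rcons.
exact: IH.
Qed.

Lemma matching_eq M e1 e2 : is_matching W Vf M -> e1 \in M -> e2 \in M ->
  (e1.1 == e2.1) || (e1.2 == e2.2) -> e1 = e2.
Proof.
case/andP => _ /forallP H h1 h2 h.
by move: (H e1); rewrite h1 /= => /forallP /(_ e2); rewrite h2 h /= => /eqP.
Qed.

Lemma inM_uniq M y p z : is_matching W Vf M -> inM M y p -> inM M y z -> p = z.
Proof.
move=> HM; case: y => [v|f]; case: p => [v1|f1] //; case: z => [v2|f2] //= h1 h2.
  by have [] := matching_eq HM h1 h2 (introT orP (or_introl (eqxx _))) => ->.
by have [] := matching_eq HM h1 h2 (introT orP (or_intror (eqxx _))) => ->.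
Qed.


Lemma unmatched_inM M x z : unmatched W M x -> inM M x z = false.
Proof.
case: x => [v|f]; case: z => [v'|f'] //=.
  by case/andP => _ /forallP /(_ f') /negbTE.
by move/forallP/(_ v')/negbTE.
Qed.

Lemma alt_ext M x s z : is_matching W Vf M -> unmatched W M x ->
  alt_path W Vf M x s -> z \notin x :: s -> adjBp W Vf (last x s) z ->
  isvar (last x s) = isvar x -> alt_path W Vf M x (rcons s z).
Proof.
move=> HM Hx Hp Hz Ha Ht; rewrite alt_path_rcons Hp Hz Ha /=.
have Hodd : odd (size s) = false.
  case/and3P: Hp => _ _ Hr; move: (alt_rec_var Hr); rewrite Ht.
  by case: (isvar x); case: (odd (size s)).
rewrite Hodd; apply/eqP.
clear Ha Ht; move: Hp Hz Hodd; case/lastP: s => [|s0 y] /=; first by rewrite unmatched_inM.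
rewrite alt_path_rcons last_rcons size_rcons /= => /andP[_ /and3P[_ _ /eqP Hm]] Hz Hodd.
apply/negbTE/negP => Hyz.
have Hy : inM M y (last x s0) by rewrite inM_sym Hm; move: Hodd; case: (odd (size s0)).
have E := inM_uniq HM Hy Hyz.
move: Hz; rewrite -E -rcons_cons mem_rcons inE negb_or => /andP[_].
by rewrite mem_last.
Qed.

Lemma eq_alt_rec M M' b x s :
  (forall u w, u \in x :: s -> w \in x :: s -> inM M u w = inM M' u w) ->
  alt_rec W Vf M b x s = alt_rec W Vf M' b x s.
Proof.
elim: s b x => //= y s IH b x H.
rewrite H ?mem_head ?inE ?eqxx ?orbT // (IH _ y) // => u w hu hw.
by apply: H; rewrite inE ?hu ?hw orbT.
Qed.

Lemma matching_sub M M' : M' \subset M -> is_matching W Vf M -> is_matching W Vf M'.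
Proof.
move=> /fintype.subsetP sub /andP[/forallP H1 /forallP H2]; apply/andP; split.
  by apply/forallP => e; apply/implyP => /sub he; move: (H1 e); rewrite he.
apply/forallP => e1; apply/implyP => h1; apply/forallP => e2; apply/implyP => h2.
by move: (H2 e1); rewrite (sub _ h1) /= => /forallP /(_ e2); rewrite (sub _ h2).
Qed.

Lemma matching_add M e : is_matching W Vf M -> e.1 \notin W -> e.1 \in Vf e.2 ->
  (forall f, (e.1, f) \notin M) -> (forall v, (v, e.2) \notin M) ->
  is_matching W Vf (e |: M).
Proof.
move=> HM hW hV h1 h2; move: (HM) => /andP[/forallP H1 _]; apply/andP; split.
  apply/forallP => e'; apply/implyP; rewrite in_setU1 => /orP[/eqP->|he].
    by rewrite hW hV.
  by move: (H1 e'); rewrite he.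
apply/forallP => e1; apply/implyP => k1; apply/forallP => e2; apply/implyP => k2.
apply/implyP => h.
move: k1 k2; rewrite !in_setU1 => /orP[/eqP E1|k1] /orP[/eqP E2|k2].
- by rewrite E1 E2.
- exfalso; move: h; rewrite E1 => /orP[/eqP E|/eqP E].
    by move: (h1 e2.2); rewrite E -surjective_pairing k2.
  by move: (h2 e2.1); rewrite E -surjective_pairing k2.
- exfalso; move: h; rewrite E2 => /orP[/eqP E|/eqP E].
    by move: (h1 e1.2); rewrite -E -surjective_pairing k1.
  by move: (h2 e1.1); rewrite -E -surjective_pairing k1.
- by apply/eqP; apply: matching_eq HM k1 k2 h.
Qed.

Lemma augment n M x s : size s <= n -> is_matching W Vf M -> unmatched W M x ->
  ~~ isvar x -> alt_path W Vf M x s -> unmatched W M (last x s) ->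
  isvar (last x s) -> exists M', is_matching W Vf M' /\ #|M'| = #|M|.+1.
Proof.
elim: n M x s => [|n IH] M x s Hn HM Hx Hxv Hp Hl Hlv.
  by case: s Hn Hp Hl Hlv => // _ _ _ Hlv; rewrite /= (negbTE Hxv) in Hlv.
case: s Hn Hp Hl Hlv => [|a [|b s']] Hn Hp Hl Hlv.
- by rewrite /= (negbTE Hxv) in Hlv.
- clear Hn; rewrite /= in Hl Hlv; case/and3P: Hp => _ _ /= /andP[Hxa _].
  case: x Hx Hxv Hxa => [v|f0] Hx Hxv Hxa //.
  case: a Hl Hlv Hxa => [v0|f] Hl Hlv Hxa //.
  case/and3P: Hxa => _ hW hV.
  exists ((v0, f0) |: M); split.
    apply: matching_add => //= [f|v].
      by move: Hl => /andP[_ /forallP]; apply.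
    by move: Hx => /forallP; apply.
  rewrite cardsU1; suff -> : (v0, f0) \notin M by [].
  by move: Hx => /forallP; apply.
- rewrite /= in Hl Hlv Hn; case/and3P: Hp => Hx0 Hu Hr.
  move: Hr => /= /and3P[Hxa /eqP Hxa' /and3P[Hab /eqP Hab' Hr]].
  case: x Hx Hxv Hxa Hxa' Hx0 Hu => [v|f0] Hx Hxv Hxa Hxa' Hx0 Hu //.
  case: a Hl Hlv Hxa Hxa' Hab Hab' Hu => [v0|f] Hl Hlv Hxa Hxa' Hab Hab' Hu;
    last by case/and3P: Hxa.
  case: b Hl Hlv Hab Hab' Hu Hr => [v1|f1] Hl Hlv Hab Hab' Hu Hr;
    first by case/and3P: Hab.
  case/and3P: Hxa => _ hW hV.
  move: Hab' => /= Hv0f1.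
  set M0 := M :\ (v0, f1).
  have HM0 : is_matching W Vf M0 by apply: matching_sub HM; apply: subD1set.
  have nv0 : forall f, (v0, f) \notin M0.
    move=> f; rewrite in_setD1; apply/negP => /andP[ne hf].
    by move/negP: ne; apply; apply/eqP; apply: matching_eq HM hf Hv0f1 _; rewrite eqxx.
  have nf0 : forall v, (v, f0) \notin M0.
    move=> v; rewrite in_setD1 negb_and; apply/orP; right.
    by move: Hx => /forallP; apply.
  set M1 := (v0, f0) |: M0.
  have HM1 : is_matching W Vf M1 by apply: matching_add.
  have Hu' : uniq ((inr f1 : node V F) :: s').
    by move: (Hu); rewrite !cons_uniq => /and3P[_ _].
  move: Hu; rewrite /= !inE !negb_or => /and3P[/and3P[_ nf0f1 nf0s] /andP[_ nv0s] _].
  have nv0s' : inl v0 \notin (inr f1 : node V F) :: s' by rewrite inE negb_or nv0s.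
  have E1 : forall u w, u \in (inr f1 : node V F) :: s' -> w \in (inr f1 : node V F) :: s' ->
             inM M u w = inM M1 u w.
    move=> u w hu hw.
    case: u hu => [vu|fu] hu; case: w hw => [vw|fw] hw //=.
      rewrite /M1 /M0 !inE.
      have ne : vu != v0 by apply: contraNneq nv0s' => <-.
      by rewrite !xpair_eqE (negbTE ne).
    rewrite /M1 /M0 !inE.
    have ne : vw != v0 by apply: contraNneq nv0s' => <-.
    by rewrite !xpair_eqE (negbTE ne).
  have [M' [HM' cM']] : exists M', is_matching W Vf M' /\ #|M'| = #|M1|.+1.
    apply: (IH M1 (inr f1) s') => //.
    - by move: Hn; rewrite /= !ltnS; apply: ltnW.
    - apply/forallP => v; rewrite /M1 /M0 in_setU1 in_setD1 negb_or.
      apply/andP; split.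
        by apply: contra nf0f1 => /eqP [_ ->].
      apply/negP => /andP[ne hf].
      by move/negP: ne; apply; apply/eqP; apply: matching_eq HM hf Hv0f1 _; rewrite eqxx orbT.
    - by rewrite /alt_path Hu' -(eq_alt_rec _ E1) Hr.
    - move: Hl Hlv => /=.
      have : last (inr f1) s' \in (inr f1 : node V F) :: s' by apply: mem_last.
      case: (last (inr f1) s') => [vl|fl] // hin /andP[hW' /forallP hl] _.
      rewrite /= hW' /=; apply/forallP => f; rewrite /M1 /M0 in_setU1 in_setD1 negb_or.
      have ne : vl != v0 by apply: contraNneq nv0s' => <-.
      by rewrite xpair_eqE (negbTE ne) /= (negbTE (hl f)) andbF.
  exists M'; split => //; rewrite cM' /M1 cardsU1 (nf0 v0) (cardsD1 (v0, f1) M) Hv0f1.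
  by [].
Qed.


Lemma T_IP M y : reflect (exists x s, [&& unmatched W M x, isvar x,
   alt_path W Vf M x s & last x s == y]) (y \in T_I W Vf M).
Proof. by rewrite inE; apply: asboolP. Qed.

Lemma T_OP M y : reflect (exists x s, [&& unmatched W M x, ~~ isvar x,
   alt_path W Vf M x s & last x s == y]) (y \in T_O W Vf M).
Proof. by rewrite inE; apply: asboolP. Qed.

Lemma T_I_inBp M y : y \in T_I W Vf M -> inBp W y.
Proof.
case/T_IP => x [s /and4P[_ _ /and3P[hx _ hr] /eqP <-]].
exact: alt_rec_inBp hr.
Qed.

Lemma T_O_inBp M y : y \in T_O W Vf M -> inBp W y.
Proof.
case/T_OP => x [s /and4P[_ _ /and3P[hx _ hr] /eqP <-]].
exact: alt_rec_inBp hr.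
Qed.

Lemma TIO_aux M n x1 s1 : is_max_matching W Vf M -> size s1 <= n ->
  unmatched W M x1 -> isvar x1 -> alt_path W Vf M x1 s1 ->
  last x1 s1 \notin T_O W Vf M.
Proof.
move=> [HM Hmax]; elim: n x1 s1 => [|n IH] x1 s1 Hn Hx1 Hv1 Hp1;
  apply/negP => /T_OP [x2 [s2 /and4P[Hx2 Hv2 Hp2 /eqP Hl]]].
- move: Hn; rewrite leqn0 => /nilP Es1; rewrite Es1 /= in Hl.
  rewrite -Hl in Hx1 Hv1.
  have [M' [HM' cM']] := augment (leqnn _) HM Hx2 Hv2 Hp2 Hx1 Hv1.
  by move: (Hmax _ HM'); rewrite cM' ltnn.
- case/lastP: s1 Hn Hp1 Hl => [|s y] Hn Hp1 Hl.
  + rewrite /= in Hl; rewrite -Hl in Hx1 Hv1.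
    have [M' [HM' cM']] := augment (leqnn _) HM Hx2 Hv2 Hp2 Hx1 Hv1.
    by move: (Hmax _ HM'); rewrite cM' ltnn.
  + move: (Hp1); rewrite alt_path_rcons => /andP[Hp1' /and3P[_ Hadj /eqP Hpar]].
    rewrite last_rcons in Hl.
    have Hn' : size s <= n by move: Hn; rewrite size_rcons ltnS.
    move/negP: (IH x1 s Hn' Hx1 Hv1 Hp1'); apply.
    have [Hin|Hnin] := boolP (last x1 s \in x2 :: s2).
      have [s' [Hs' Hls']] := alt_path_prefix Hp2 Hin.
      by apply/T_OP; exists x2, s'; rewrite Hx2 Hv2 Hs' Hls' eqxx.
    apply/T_OP; exists x2, (rcons s2 (last x1 s)).
    rewrite Hx2 Hv2 last_rcons eqxx andbT /=.
    rewrite alt_path_rcons Hp2 Hnin Hl adjBp_sym Hadj /= inM_sym Hpar.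
    move: Hp1 Hp2; rewrite /alt_path => /and3P[_ _ Hr1] /and3P[_ _ Hr2].
    move: (alt_rec_var Hr1) (alt_rec_var Hr2); rewrite last_rcons Hl Hv1 (negbTE Hv2).
    by rewrite size_rcons /= => -> ; rewrite negbK => ->.
Qed.

Lemma TIO_disj M y : is_max_matching W Vf M -> y \in T_I W Vf M -> y \in T_O W Vf M -> False.
Proof.
move=> Hmax /T_IP [x [s /and4P[Hx Hv Hp /eqP <-]]].
by move/negP: (TIO_aux Hmax (leqnn _) Hx Hv Hp).
Qed.

Lemma T_O_nbr M f (a : V) : is_matching W Vf M -> inr f \in T_O W Vf M -> a \in Vf f ->
  a \notin W -> inl a \in T_O W Vf M.
Proof.
move=> HM /T_OP [x [s /and4P[Hx Hv Hp /eqP Hl]]] ha hW.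
have [Hin|Hnin] := boolP (inl a \in x :: s).
  have [s' [Hs' Hls']] := alt_path_prefix Hp Hin.
  by apply/T_OP; exists x, s'; rewrite Hx Hv Hs' Hls' eqxx.
apply/T_OP; exists x, (rcons s (inl a)); rewrite Hx Hv last_rcons eqxx andbT /=.
apply: alt_ext => //; rewrite Hl //=; first by rewrite /adjBp /= hW ha.
by rewrite (negbTE Hv).
Qed.

Lemma T_C_nbr M f (a : V) : is_matching W Vf M -> inr f \in T_C W Vf M -> a \in Vf f ->
  a \notin W -> inl a \notin T_I W Vf M.
Proof.
move=> HM; rewrite inE => /and3P[_ nI _] ha hW; apply/negP => /T_IP [x [s /and4P[Hx Hv Hp /eqP Hl]]].
move/negP: nI; apply.
have [Hin|Hnin] := boolP (inr f \in x :: s).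
  have [s' [Hs' Hls']] := alt_path_prefix Hp Hin.
  by apply/T_IP; exists x, s'; rewrite Hx Hv Hs' Hls' eqxx.
apply/T_IP; exists x, (rcons s (inr f)); rewrite Hx Hv last_rcons eqxx andbT /=.
apply: alt_ext => //; rewrite Hl //=; first by rewrite /adjBp /= hW ha.
Qed.


Lemma self_contained_sub R S : self_contained Vf R S -> S \subset R.
Proof.
case/and3P => /fintype.subsetP H _ _; apply/fintype.subsetP => x /H.
by rewrite inE => /andP[].
Qed.

Lemma self_contained_con R S x : self_contained Vf R S -> x \in S -> ~~ isvar x.
Proof.
by case/and3P => /fintype.subsetP H _ _ /H; rewrite inE => /andP[].
Qed.

Lemma adjR_sub R S : adjR Vf R S \subset R.
Proof. by apply/fintype.subsetP => x; rewrite inE => /andP[]. Qed.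

Lemma co_clusters_sub R run : co_run Vf R run -> forall C,
  C \in co_clusters Vf R run -> C \subset R.
Proof.
elim: run R => [|Sc run IH] R //= [/and3P[Hs _ _] Hr] C.
rewrite inE => /orP[/eqP ->|HC].
  by rewrite finset.subUset adjR_sub (self_contained_sub Hs).
by apply: fintype.subset_trans (IH _ Hr _ HC) _; apply: finset.subsetDl.
Qed.

Lemma co_clusters_uniq R run : co_run Vf R run -> forall C D z,
  C \in co_clusters Vf R run -> D \in co_clusters Vf R run -> z \in C -> z \in D -> C = D.
Proof.
elim: run R => [|Sc run IH] R //= [_ Hr] C D z.
have sub := co_clusters_sub Hr.
rewrite !inE => /orP[/eqP ->|HC] /orP[/eqP ->|HD] // zC zD.
- by move: (fintype.subsetP (sub _ HD) _ zD); rewrite inE zC.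
- by move: (fintype.subsetP (sub _ HC) _ zC); rewrite inE zD.
- exact: IH Hr _ _ _ HC HD zC zD.
Qed.

Lemma co_cover R run : co_run Vf R run -> forall z, z \in R ->
  exists2 C, C \in co_clusters Vf R run & z \in C.
Proof.
elim: run R => [|Sc run IH] R /=; first by move=> -> z; rewrite finset.in_set0.
move=> [_ Hr] z zR.
have [zC|zC] := boolP (z \in Sc :|: adjR Vf R Sc).
  by exists (Sc :|: adjR Vf R Sc); rewrite // inE eqxx.
have zR' : z \in R :\: (Sc :|: adjR Vf R Sc) by rewrite finset.in_setD zC zR.
have [C hC zC'] := IH _ Hr z zR'.
by exists C; rewrite // inE hC orbT.
Qed.

Definition crel (T : {set node V F}) := fun a b => [&& a \in T, b \in T & adjB Vf a b].

Lemma crel_sym T : symmetric (crel T).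
Proof.
by move=> a b; rewrite /crel adjB_sym; case: (a \in T); case: (b \in T).
Qed.

Lemma comps_form (T : {set node V F}) C : C \in comps Vf T ->
  exists2 x, x \in T & C = [set y in T | connect (crel T) x y].
Proof. by case/imsetP => x hx ->; exists x. Qed.

Lemma comps_sub (T : {set node V F}) C : C \in comps Vf T -> C \subset T.
Proof.
case/comps_form => x _ ->; apply/fintype.subsetP => y; rewrite inE => /andP[]//.
Qed.

Lemma comps_uniq (T : {set node V F}) C D z : C \in comps Vf T -> D \in comps Vf T ->
  z \in C -> z \in D -> C = D.
Proof.
case/comps_form => x _ -> /comps_form [x' _ ->].
rewrite !inE => /andP[zT cxz] /andP[_ cx'z].
have cs := sym_connect_sym (crel_sym T).
apply/finset.setP => y; rewrite !inE; case: (y \in T) => //=.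
apply/idP/idP => H.
  by apply: connect_trans cx'z _; apply: connect_trans _ H; rewrite cs.
by apply: connect_trans cxz _; apply: connect_trans _ H; rewrite cs.
Qed.

Lemma comps_adj (T : {set node V F}) C u w : C \in comps Vf T -> u \in C -> w \in T -> adjB Vf u w -> w \in C.
Proof.
case/comps_form => x _ ->; rewrite !inE => /andP[uT cxu] wT ad.
rewrite wT /=; apply: connect_trans cxu _; apply: connect1.
by rewrite /crel uT wT ad.
Qed.

Lemma comps_mem (T : {set node V F}) z : z \in T -> exists2 C, C \in comps Vf T & z \in C.
Proof.
move=> zT; exists [set y in T | connect (crel T) z y].
  by apply/imsetP; exists z.
by rewrite inE zT connect0.
Qed.


Section Clusters.
Variables (M : {set V * F}) (run : seq {set node V F}).
Hypothesis Hmax : is_max_matching W Vf M.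
Hypothesis Hrun : co_run Vf (T_C W Vf M) run.

Definition kz (z : node V F) : nat :=
  if z \in T_C W Vf M then 0 else if z \in T_I W Vf M then 1
  else if z \in T_O W Vf M then 2 else 3.

Lemma kz0 C z : C \in [set C | C \in co_clusters Vf (T_C W Vf M) run] -> z \in C -> kz z = 0.
Proof.
rewrite inE => hC zC; rewrite /kz.
by rewrite (fintype.subsetP (co_clusters_sub Hrun hC) _ zC).
Qed.

Lemma T_C_notI z : z \in T_C W Vf M -> z \notin T_I W Vf M.
Proof. by rewrite inE => /and3P[]. Qed.
Lemma T_C_notO z : z \in T_C W Vf M -> z \notin T_O W Vf M.
Proof. by rewrite inE => /and3P[]. Qed.
Lemma T_C_inBp z : z \in T_C W Vf M -> inBp W z.
Proof. by rewrite inE => /and3P[]. Qed.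

Lemma kz1 C z : C \in comps Vf (T_I W Vf M) -> z \in C -> kz z = 1.
Proof.
move=> hC zC; have zI := fintype.subsetP (comps_sub hC) _ zC.
rewrite /kz zI; case: ifP => // /T_C_notI; by rewrite zI.
Qed.

Lemma kz2 C z : C \in comps Vf (T_O W Vf M) -> z \in C -> kz z = 2.
Proof.
move=> hC zC; have zO := fintype.subsetP (comps_sub hC) _ zC.
rewrite /kz zO; case: ifP => [/T_C_notO|_]; first by rewrite zO.
by case: ifP => // zI; case: (TIO_disj Hmax zI zO).
Qed.

Lemma kz3 C z : C \in [set [set inl w] | w in W] -> z \in C -> kz z = 3.
Proof.
case/imsetP => w hw ->; rewrite inE => /eqP ->.
have nb : ~~ inBp W (inl w : node V F) by rewrite /= hw.
rewrite /kz; case: ifP => [/T_C_inBp|_]; first by rewrite (negbTE nb).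
case: ifP => [/T_I_inBp|_]; first by rewrite (negbTE nb).
by case: ifP => [/T_O_inBp|_]; first by rewrite (negbTE nb).
Qed.

Lemma Cl_uniq Cl :
  Cl = [set C | C \in co_clusters Vf (T_C W Vf M) run] :|: comps Vf (T_I W Vf M)
        :|: comps Vf (T_O W Vf M) :|: [set [set inl w] | w in W] ->
  forall C D z, C \in Cl -> D \in Cl -> z \in C -> z \in D -> C = D.
Proof.
move=> -> C D z; rewrite !finset.in_setU => /orP[/orP[/orP[hC|hC]|hC]|hC]
  /orP[/orP[/orP[hD|hD]|hD]|hD] zC zD;
  try (move: (kz0 hC zC) || move: (kz1 hC zC) || move: (kz2 hC zC) || move: (kz3 hC zC));
  try (move: (kz0 hD zD) || move: (kz1 hD zD) || move: (kz2 hD zD) || move: (kz3 hD zD));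
  move=> -> /eqP //= _.
- move: hC hD; rewrite !inE => hC hD.
  exact (co_clusters_uniq Hrun hC hD zC zD).
- by exact (comps_uniq hC hD zC zD).
- by exact (comps_uniq hC hD zC zD).
- case/imsetP: hC => w _ EC; case/imsetP: hD => w' _ ED.
  by move: zC zD; rewrite EC ED !inE => /eqP -> /eqP [->].
Qed.

End Clusters.

Lemma disjP (T : finType) (A B : {set T}) :
  (forall t : T, t \in A -> t \notin B) -> [disjoint A & B].
Proof.
move=> H; rewrite disjoint_subset; apply/fintype.subsetP => t /H.
by rewrite inE.
Qed.

Lemma pblockE (T : finType) (P : {set {set T}}) (C : {set T}) (t : T) :
  (forall C D, C \in P -> D \in P -> t \in C -> t \in D -> C = D) ->
  C \in P -> t \in C -> finset.pblock P t = C.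
Proof.
move=> H CP tC; rewrite /finset.pblock; case: pickP => [D /andP[DP xD]|/(_ C)].
  by apply: H.
by rewrite /= CP tC.
Qed.

End GraphLemmas.

Unset Implicit Arguments.
Set Strict Implicit.

Theorem theorem23 (V F : finType) (W : {set V}) (Vf : F -> {set V})
  (dX : V -> measure_display) (X : forall v, measurableType (dX v))
  (dY : F -> measure_display) (Y : forall f, measurableType (dY f))
  (phi : forall f, (forall v, X v) -> Y f) (c : forall f, Y f)
  (dO : measure_display) (Omega : measurableType dO) (R : realType)
  (P : probability Omega R)
  (XW : Omega -> forall v, X v)
  (M : {set V * F}) (Cl : {set {set node V F}})
  (Ed : {set node V F * {set node V F}})
  (Xs X' : Omega -> forall v, X v)
  (SF : {set F}) (SV : {set V}) (pv : F -> V) (xi : forall v, X v) (v : V) :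
  wf_constraints Vf phi ->
  exo_rv W XW ->
  exo_indep W P XW ->
  is_max_matching W Vf M ->
  is_CO W Vf M Cl Ed ->
  max_uniq_solvable W Vf phi c P XW M Cl ->
  is_solution W P (sys_C phi c) XW Xs ->
  [set inr f | f in SF] \subset T_C W Vf M :|: T_O W Vf M ->
  [set inl s | s in SV] \subset T_C W Vf M :|: T_O W Vf M ->
  SV \subset ~: W ->
  [set inr f | f in SF] :|: [set inl s | s in SV] \in Cl ->
  {in SF &, injective pv} ->
  pv @: SF = SV ->
  is_solution W P (do_C phi c SF pv xi) XW X' ->
  inl v \in T_C W Vf M :|: T_O W Vf M ->
  (forall x, x \in SV -> ~ dpath Cl Ed (inl x) (inl v)) ->
  {ae P, forall o, Xs o v = X' o v}.
Proof.
move=> _ _ _ Hmax HCO Hmus HXs _ _ _ HS _ Hpv HX' Hv Hnp.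
case: HCO => run [Hrun [HCl HEd]].
have HM : is_matching W Vf M := Hmax.1.
have Huq := Cl_uniq Hmax Hrun HCl.
have Hpb : forall C z, C \in Cl -> z \in C -> finset.pblock Cl z = C.
  move=> C z hC hz; apply: (pblockE _ hC hz) => C' D' hC' hD' h1 h2.
  exact: (Huq C' D' z hC' hD' h1 h2).
pose nr := fun y : node V F => forall x, x \in SV -> ~ dpath Cl Ed (inl x) y.
have nr_eq : forall y y', finset.pblock Cl y = finset.pblock Cl y' -> nr y -> nr y'.
  by move=> y y' E H x hx; rewrite /dpath -E; apply: H.
have nr_prop : forall y u (D : {set node V F}), nr y -> u \in D -> D \in Cl ->
    (u, finset.pblock Cl y) \in Ed -> nr u.
  move=> y u D Hy uD DCl He x hx [s [Hp Hl]]; apply: (Hy x hx).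
  exists (rcons s (finset.pblock Cl y)); rewrite rcons_path last_rcons Hp; split => //=.
  by apply/existsP; exists u; rewrite He andbT Hl (Hpb D u DCl uD) uD.
have SFex : forall C f, C \in Cl -> inr f \in C -> nr (inr f) -> f \notin SF.
  move=> C f hC hf Hn; apply/negP => fS.
  have pS : pv f \in SV by rewrite -Hpv; apply: imset_f.
  have fS' : (inr f : node V F) \in [set inr f | f in SF] :|: [set inl s | s in SV].
    by rewrite finset.in_setU; apply/orP; left; apply: imset_f.
  have pS' : (inl (pv f) : node V F) \in [set inr f | f in SF] :|: [set inl s | s in SV].
    by rewrite finset.in_setU; apply/orP; right; apply: imset_f.
  apply: (Hn (pv f) pS); exists [::]; split => //=.
  rewrite (Hpb _ _ HS pS') (Hpb C _ hC hf).
  exact: (Huq _ _ _ HS hC fS' hf).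
pose cond := fun S : {set node V F} => [&& S \in Cl,
   [disjoint S & [set inl w | w in W]] & [disjoint S & T_I W Vf M]].
pose Pr := fun (S : {set node V F}) (g : (forall v, X v) -> forall v, X v) =>
  cond S -> meas_map (VS Vf [set f | inr f \in S] :\: [set v | inl v \in S])
                     [set v | inl v \in S] g /\
  {ae P, forall o, forall x : forall v, X v,
     (forall s, s \in [set v | inl v \in S] -> Defs.merge W (XW o) x s = g (Defs.merge W (XW o) x) s) <->
     (forall f, f \in [set f | inr f \in S] -> sys_C phi c f (Defs.merge W (XW o) x))}.
have HGex : forall S, exists g, Pr S g.
  move=> S; have [hc|hc] := boolP (cond S); last first.
    by exists (fun x => x) => h; rewrite h in hc.
  case/and3P: (hc) => h1 h2 h3; have [g Hg] := Hmus.1 S h1 h2 h3.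
  by exists g.
have [G HG] := choice HGex.
have HU : {ae P, forall o, forall S, cond S -> forall x : forall v, X v,
     (forall s, s \in [set v | inl v \in S] -> Defs.merge W (XW o) x s = G S (Defs.merge W (XW o) x) s) <->
     (forall f, f \in [set f | inr f \in S] -> sys_C phi c f (Defs.merge W (XW o) x))}.
  apply: (filter_forall (ae_filter_ringOfSetsType P)) => S.
  have [h|h] := boolP (cond S).
    by apply: filterS (HG S h).2 => o H _.
  by apply: filterS filterT => o _ hc; case/negP: h.
case: HXs => g [mg [Hg Hae]]; case: HX' => g' [mg' [Hg' Hae']].
apply: filterS (filterI Hae (filterI Hae' HU)) => o [h1 [h2 h3]].
have core : forall C, cond C -> (forall y, y \in C -> nr y) ->
    (forall f a, inr f \in C -> a \in Vf f -> inl a \notin C -> a \notin W ->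
       Xs o a = X' o a) ->
    forall u, inl u \in C -> Xs o u = X' o u.
  move=> C hc Hnr Hpar u hu.
  have CCl : C \in Cl by case/and3P: hc.
  have uV : u \in [set v | inl v \in C] by rewrite inE.
  have e1 : Xs o u = G C (Xs o) u.
    rewrite Hg; apply: ((h3 C hc (g (XW o))).2 _ u uV) => f _; exact: h1 f.
  have e2 : X' o u = G C (X' o) u.
    rewrite Hg'; apply: ((h3 C hc (g' (XW o))).2 _ u uV) => f; rewrite inE => hf.
    by have := h2 f; rewrite /do_C (negbTE (SFex C f CCl hf (Hnr _ hf))).
  rewrite e1 e2; apply: ((HG C hc).1 u uV).1 => a.
  rewrite finset.in_setD => /andP[na]; rewrite /VS => /bigcupP[f hf ha].
  rewrite inE in na hf.
  have [aW|aW] := boolP (a \in W); first by rewrite Hg Hg' /Defs.merge aW.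
  by move: hf; rewrite inE => hf; exact: Hpar hf ha na aW.
have nr_C : forall C y y', C \in Cl -> y \in C -> y' \in C -> nr y -> nr y'.
  by move=> C y y' hC hy hy'; apply: nr_eq; rewrite (Hpb C y hC hy) (Hpb C y' hC hy').
have TOcl : forall C, C \in comps Vf (T_O W Vf M) -> C \in Cl.
  by move=> C hC; rewrite HCl !finset.in_setU hC /= orbT.
have TCcl : forall C, C \in co_clusters Vf (T_C W Vf M) run -> C \in Cl.
  by move=> C hC; rewrite HCl !finset.in_setU inE hC.
have TOl : forall u, inl u \in T_O W Vf M -> nr (inl u) -> Xs o u = X' o u.
  move=> u hu hn; have [C hC uC] := comps_mem Vf hu.
  have CCl := TOcl C hC.
  have Csub := comps_sub hC.
  apply: (core C) => //.
  - rewrite /cond CCl /=; apply/andP; split; apply: disjP => z zC.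
      apply/negP => /imsetP [w hw Ez].
      have := T_O_inBp (fintype.subsetP Csub _ zC); by rewrite Ez /= hw.
    by apply/negP => zI; apply: (TIO_disj Hmax zI (fintype.subsetP Csub _ zC)).
  - by move=> y hy; apply: (nr_C C (inl u)).
  - move=> f a hf ha na aW; exfalso; move/negP: na; apply.
    have hfO := fintype.subsetP Csub _ hf.
    have haO := T_O_nbr HM hfO ha aW.
    by apply: (comps_adj hC hf haO).
have EdO : forall f a, a \in Vf f -> inl a \in T_O W Vf M -> inr f \in T_C W Vf M ->
    (inl a, finset.pblock Cl (inr f)) \in Ed.
  move=> f a ha hO hC; rewrite HEd finset.in_setU; apply/orP; right.
  apply/imsetP; exists (a, f) => //.
  by rewrite inE /= ha hO hC orbT.
have TCl : forall run' R', co_run Vf R' run' -> R' \subset T_C W Vf M ->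
    (forall C, C \in co_clusters Vf R' run' -> C \in Cl) ->
    co_edges Vf (T_C W Vf M) R' run' \subset Ed ->
    (forall u, inl u \in T_C W Vf M :\: R' -> nr (inl u) -> Xs o u = X' o u) ->
    forall u, inl u \in T_C W Vf M -> nr (inl u) -> Xs o u = X' o u.
  elim => [|Sc run' IH] R' /= Hr Hsub Hcl Hed Hprev u hu hn.
    by apply: Hprev => //; rewrite finset.in_setD Hr finset.in_set0 hu.
  case: Hr => Hmin Hr'.
  have Hsc : self_contained Vf R' Sc by case/and3P: Hmin.
  set C := Sc :|: adjR Vf R' Sc.
  have HC : forall u0, inl u0 \in C -> nr (inl u0) -> Xs o u0 = X' o u0.
    move=> u0 hu0 hn0.
    have CCl : C \in Cl by apply: Hcl; rewrite inE eqxx.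
    have CsubR : C \subset R' by rewrite finset.subUset adjR_sub (self_contained_sub Hsc).
    have CsubT := fintype.subset_trans CsubR Hsub.
    apply: (core C) => //.
    - rewrite /cond CCl /=; apply/andP; split; apply: disjP => z zC.
        apply/negP => /imsetP [w hw Ez].
        have := T_C_inBp (fintype.subsetP CsubT _ zC); by rewrite Ez /= hw.
      exact: T_C_notI (fintype.subsetP CsubT _ zC).
    - by move=> y hy; apply: (nr_C C (inl u0)).
    - move=> f a hf ha na aW.
      have hfS : inr f \in Sc.
        move: hf; rewrite finset.in_setU => /orP[//|].
        rewrite inE => /andP[_ /existsP[x /andP[xSc adj]]].
        by case: x xSc adj => [vx|fx] xSc adj //; have := self_contained_con Hsc xSc.
      have hfT : inr f \in T_C W Vf M.
        by apply: (fintype.subsetP Hsub); apply: (fintype.subsetP CsubR); rewrite finset.in_setU hfS.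
      have nI := T_C_nbr HM hfT ha aW.
      have pbf : finset.pblock Cl (inr f) = C by apply: Hpb.
      have nrf : nr (inr f) by apply: (nr_C C (inl u0)).
      have [hO|hO] := boolP (inl a \in T_O W Vf M).
        have [D hD aD] := comps_mem Vf hO.
        apply: (TOl _ hO); apply: (nr_prop (inr f) (inl a) D nrf aD (TOcl D hD)).
        exact: (EdO f a ha hO hfT).
      have hT : inl a \in T_C W Vf M by rewrite inE /= aW nI hO.
      have naR : inl a \notin R'.
        apply: contra na => aR; rewrite finset.in_setU; apply/orP; right.
        rewrite inE aR /=; apply/existsP; exists (inr f); by rewrite hfS /= ha.
      apply: Hprev; first by rewrite finset.in_setD naR hT.
      have [D hD aD] := co_cover Hrun hT.
      apply: (nr_prop (inr f) (inl a) D nrf aD (TCcl D hD)).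
      rewrite pbf; apply: (fintype.subsetP Hed); rewrite finset.in_setU; apply/orP; left.
      apply/imsetP; exists (inl a) => //.
      rewrite finset.in_setD; apply/andP; split.
        by rewrite inE (negbTE naR).
      rewrite inE hT /=; apply/existsP; exists (inr f); by rewrite hfS /= ha.
  apply: (IH (R' :\: C)) => //.
  - by apply: fintype.subset_trans Hsub; apply: finset.subsetDl.
  - by move=> C' hC'; apply: Hcl; rewrite inE hC' orbT.
  - by apply: fintype.subset_trans Hed; apply: finset.subsetUr.
  - move=> u1; rewrite !finset.in_setD negb_and negbK => /andP[/orP[h|h] h'] hn1.
      exact: HC.
    by apply: (Hprev _ _ hn1); rewrite finset.in_setD h h'.
move: Hv; rewrite finset.in_setU => /orP[hv|hv].
  apply: (TCl run (T_C W Vf M)) => //.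
  - by rewrite HEd; apply: finset.subsetUl.
  - by move=> u; rewrite finset.in_setD => /andP[/negP].
exact: TOl.
Qed.
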